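(* Let $H$ be a real Hilbert space, $f:H\to\mathbb{R}\cup\{+\infty\}$ a proper lower semicontinuous function, $\bar x\in\operatorname{dom}f$, $p\in\partial_pf(\bar x)$, and $A\subset H$ a nonempty compact set. The following are equivalent: (i) there exists $\beta>0$ such that $f''_-(\bar x,p,h)\ge\beta$ holds uniformly with respect to $h\in A$; (ii) there exists $\beta>0$ such that $f''_-(\bar x,p,h)\ge\beta$ for all $h\in A$; (iii) $f''_-(\bar x,p,h)>0$ for all $h\in A$.
   Context: $B_H$ is the closed unit ball of $H$. Proximal subdifferential: $\zeta\in\partial_p f(x)$ iff there exist $\sigma,\delta>0$ with $f(y)\ge f(x)+\langle\zeta,y-x\rangle-\frac{\sigma}{2}\|y-x\|^2$ whenever $\|y-x\|<\delta$. $\Delta_2 f(\bar x,p,t,u):=\frac{f(\bar x+tu)-f(\bar x)-t\langle p,u\rangle}{\frac12t^2}$ for $t>0$, and $f''_-(\bar x,p,h):=\liminf_{h'\to h,\,t\downarrow0}\Delta_2f(\bar x,p,t,h')$. Definition: for $\beta>0$ and nonempty $A\subset H$, ''$f''_-(\bar x,p,h)\ge\beta$ holds uniformly with respect to $h\in A$'' means that for every $\varepsilon>0$ there exists $\delta>0$ such that $\Delta_2f(\bar x,p,t,h)\ge\beta-\varepsilon$ for all $t\in(0,\delta)$ and all $h\in A+\delta B_H$. *)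

(* Defs.v *)
From Stdlib Require Import Reals Lra List ClassicalEpsilon.
Open Scope R_scope.

Record Hilbert := {
  hT :> Type;
  hzero : hT;
  hadd : hT -> hT -> hT;
  hopp : hT -> hT;
  hscal : R -> hT -> hT;
  hinner : hT -> hT -> R;
  hadd_assoc : forall x y z, hadd x (hadd y z) = hadd (hadd x y) z;
  hadd_comm : forall x y, hadd x y = hadd y x;
  hadd_zero : forall x, hadd x hzero = x;
  hadd_opp : forall x, hadd x (hopp x) = hzero;
  hscal_one : forall x, hscal 1 x = x;
  hscal_assoc : forall a b x, hscal a (hscal b x) = hscal (a * b) x;
  hscal_distr_l : forall a x y, hscal a (hadd x y) = hadd (hscal a x) (hscal a y);
  hscal_distr_r : forall a b x, hscal (a + b) x = hadd (hscal a x) (hscal b x);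
  hinner_sym : forall x y, hinner x y = hinner y x;
  hinner_add_l : forall x y z, hinner (hadd x y) z = hinner x z + hinner y z;
  hinner_scal_l : forall a x y, hinner (hscal a x) y = a * hinner x y;
  hinner_pos : forall x, 0 <= hinner x x;
  hinner_def : forall x, hinner x x = 0 -> x = hzero;
  hcomplete : forall u : nat -> hT,
    (forall eps, eps > 0 -> exists N, forall m n, (N <= m)%nat -> (N <= n)%nat ->
        sqrt (hinner (hadd (u m) (hopp (u n))) (hadd (u m) (hopp (u n)))) < eps) ->
    exists l, forall eps, eps > 0 -> exists N, forall n, (N <= n)%nat ->
        sqrt (hinner (hadd (u n) (hopp l)) (hadd (u n) (hopp l))) < eps
}.

Definition hnorm {H : Hilbert} (x : H) : R := sqrt (hinner H x x).
Definition hsub {H : Hilbert} (x y : H) : H := hadd H x (hopp H y).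

Inductive Rinf := RFin (r : R) | RPinf.
(* full extended reals, for liminf values *)
Inductive Rbar := Fin (r : R) | Pinf | Minf.

Definition Rbar_le (a b : Rbar) : Prop :=
  match a, b with
  | Minf, _ => True
  | _, Pinf => True
  | Fin x, Fin y => x <= y
  | _, _ => False
  end.
Definition Rbar_lt (a b : Rbar) : Prop := Rbar_le a b /\ a <> b.

Definition Rbar_is_lub (E : Rbar -> Prop) (s : Rbar) : Prop :=
  (forall x, E x -> Rbar_le x s) /\ (forall b, (forall x, E x -> Rbar_le x b) -> Rbar_le s b).
Definition Rbar_is_glb (E : Rbar -> Prop) (s : Rbar) : Prop :=
  (forall x, E x -> Rbar_le s x) /\ (forall b, (forall x, E x -> Rbar_le b x) -> Rbar_le b s).

(* supremum / infimum of a set of extended reals (they always exist) *)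
Definition Rbar_sup (E : Rbar -> Prop) : Rbar :=
  epsilon (inhabits Pinf) (fun s => Rbar_is_lub E s).
Definition Rbar_inf (E : Rbar -> Prop) : Rbar :=
  epsilon (inhabits Pinf) (fun s => Rbar_is_glb E s).

Section Notions.
Variable H : Hilbert.

Definition proper (f : H -> Rinf) : Prop := exists x, exists r, f x = RFin r.

Definition lsc (f : H -> Rinf) : Prop :=
  forall x r, (match f x with RFin v => r < v | RPinf => True end) ->
    exists d, d > 0 /\ forall y, hnorm (hsub y x) < d ->
      match f y with RFin v => r < v | RPinf => True end.

Definition in_dom (f : H -> Rinf) (x : H) : Prop := exists r, f x = RFin r.

Definition proximal_subgradient (f : H -> Rinf) (x p : H) : Prop :=
  exists sigma d, sigma > 0 /\ d > 0 /\
    forall y, hnorm (hsub y x) < d ->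
      match f y, f x with
      | RPinf, _ => True
      | RFin fy, RFin fx => fy >= fx + hinner H p (hsub y x) - sigma / 2 * (hnorm (hsub y x)) ^ 2
      | RFin _, RPinf => False
      end.

Definition open_set (U : H -> Prop) : Prop :=
  forall x, U x -> exists d, d > 0 /\ forall y, hnorm (hsub y x) < d -> U y.

Definition compact_set (A : H -> Prop) : Prop :=
  forall (I : Type) (U : I -> H -> Prop),
    (forall i, open_set (U i)) ->
    (forall x, A x -> exists i, U i x) ->
    exists l : list I, forall x, A x -> exists i, In i l /\ U i x.

Definition Delta2 (f : H -> Rinf) (x p : H) (t : R) (u : H) : Rbar :=
  match f (hadd H x (hscal H t u)), f x with
  | RFin a, RFin b => Fin ((a - b - t * hinner H p u) / (/ 2 * t ^ 2))
  | RPinf, RFin _ => Pinf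
  | _, RPinf => Minf (* irrelevant: only used for x in dom f *)
  end.

(* f''_-(x, p, h) = liminf_{h' -> h, t ↓ 0} Δ2 f(x,p,t,h')
                  = sup_{d>0} inf { Δ2 f(x,p,t,h') : 0 < t < d, ||h'-h|| < d } *)
Definition lower_sd (f : H -> Rinf) (x p h : H) : Rbar :=
  Rbar_sup (fun s => exists d, d > 0 /\
    s = Rbar_inf (fun v => exists t h', 0 < t < d /\ hnorm (hsub h' h) < d /\
                                        v = Delta2 f x p t h')).

Definition enlarge (A : H -> Prop) (d : R) (h : H) : Prop :=
  exists a b, A a /\ hnorm b <= d /\ h = hadd H a b.

(* "f''_-(x,p,h) >= beta holds uniformly with respect to h in A" *)
Definition uniform_lower_sd (f : H -> Rinf) (x p : H) (beta : R) (A : H -> Prop) : Prop :=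
  forall eps, eps > 0 -> exists d, d > 0 /\
    forall t h, 0 < t < d -> enlarge A d h -> Rbar_le (Fin (beta - eps)) (Delta2 f x p t h).

End Notions.

(* Main.v *)
Require Import Defs.
From Stdlib Require Import Reals Lra List Classical ClassicalEpsilon.
Open Scope R_scope.

Lemma Rbar_le_trans a b c : Rbar_le a b -> Rbar_le b c -> Rbar_le a c.
Proof. destruct a, b, c; simpl; intros; first [tauto | lra]. Qed.

Lemma Rbar_lub_ex (E : Rbar -> Prop) : exists s, Rbar_is_lub E s.
Proof.
  destruct (classic ((exists r, E (Fin r)) /\ (exists M, forall x, E x -> Rbar_le x (Fin M))))
    as [[[r0 Hr0] [M HM]] | Hn].
  - set (F := fun r => E (Fin r)).
    assert (Hb : bound F). { exists M. intros x Hx. exact (HM _ Hx). }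
    destruct (completeness F Hb (ex_intro _ r0 Hr0)) as [l [Hl1 Hl2]].
    exists (Fin l). split.
    + intros x Hx. destruct x as [r| |]; simpl.
      * apply Hl1. exact Hx.
      * specialize (HM _ Hx). simpl in HM. exact HM.
      * exact I.
    + intros b Hb'. destruct b as [r| |]; simpl.
      * apply Hl2. intros x Hx. exact (Hb' _ Hx).
      * exact I.
      * specialize (Hb' _ Hr0). simpl in Hb'. exact Hb'.
  - destruct (classic (forall x, E x -> x = Minf)) as [Hm | Hm].
    + exists Minf. split.
      * intros x Hx. rewrite (Hm x Hx). simpl. exact I.
      * intros b _. simpl. exact I.
    + exists Pinf. split.
      * intros x _. destruct x; simpl; exact I.
      * intros b Hb. destruct b as [r| |]; simpl.
        -- exfalso. apply Hn. split; [| exists r; exact Hb].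
           apply not_all_ex_not in Hm. destruct Hm as [x Hx].
           apply imply_to_and in Hx. destruct Hx as [Hx1 Hx2].
           destruct x as [s| |].
           ++ exists s; exact Hx1.
           ++ specialize (Hb _ Hx1); simpl in Hb; contradiction.
           ++ congruence.
        -- exact I.
        -- exfalso. apply Hm. intros x Hx. specialize (Hb _ Hx).
           destruct x; simpl in Hb; first [contradiction | reflexivity].
Qed.

Definition Rbar_neg (x : Rbar) : Rbar :=
  match x with Fin r => Fin (-r) | Pinf => Minf | Minf => Pinf end.
Lemma Rbar_neg_inv x : Rbar_neg (Rbar_neg x) = x.
Proof. destruct x; simpl; try rewrite Ropp_involutive; reflexivity. Qed.
Lemma Rbar_neg_le a b : Rbar_le (Rbar_neg a) (Rbar_neg b) <-> Rbar_le b a.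
Proof. destruct a, b; simpl; split; intros; first [tauto | lra]. Qed.

Lemma Rbar_glb_ex (E : Rbar -> Prop) : exists s, Rbar_is_glb E s.
Proof.
  destruct (Rbar_lub_ex (fun x => E (Rbar_neg x))) as [s [H1 H2]].
  exists (Rbar_neg s). split.
  - intros x Hx. apply (proj1 (Rbar_neg_le x (Rbar_neg s))).
    rewrite Rbar_neg_inv. apply H1. rewrite Rbar_neg_inv. exact Hx.
  - intros b Hb. apply (proj1 (Rbar_neg_le (Rbar_neg s) b)).
    rewrite Rbar_neg_inv. apply H2. intros y Hy.
    apply (proj1 (Rbar_neg_le (Rbar_neg b) y)). rewrite Rbar_neg_inv.
    apply Hb. exact Hy.
Qed.

Lemma sup_spec E : Rbar_is_lub E (Rbar_sup E).
Proof. unfold Rbar_sup. apply epsilon_spec. apply Rbar_lub_ex. Qed.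
Lemma inf_spec E : Rbar_is_glb E (Rbar_inf E).
Proof. unfold Rbar_inf. apply epsilon_spec. apply Rbar_glb_ex. Qed.

Lemma Rbar_le_eps beta X : (forall eps, eps > 0 -> Rbar_le (Fin (beta - eps)) X) -> Rbar_le (Fin beta) X.
Proof.
  intros HX. destruct X as [r| |]; simpl.
  - apply Rnot_lt_le. intro Hlt. assert (Hp : (beta - r) / 2 > 0) by lra.
    specialize (HX _ Hp). simpl in HX. lra.
  - exact I.
  - specialize (HX 1 Rlt_0_1). simpl in HX. exact HX.
Qed.

Lemma hadd_zero_l (H : Hilbert) (x : H) : hadd H (hzero H) x = x.
Proof. rewrite hadd_comm. apply hadd_zero. Qed.

Lemma hadd_cancel (H : Hilbert) (a x y : H) : hadd H a x = hadd H a y -> x = y.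
Proof.
  intro E.
  rewrite <- (hadd_zero_l H x), <- (hadd_zero_l H y).
  rewrite <- (hadd_opp H a), (hadd_comm H a (hopp H a)), <- !hadd_assoc, E.
  reflexivity.
Qed.

Lemma hscal0 (H : Hilbert) (x : H) : hscal H 0 x = hzero H.
Proof.
  apply (hadd_cancel H (hscal H 0 x)). rewrite hadd_zero, <- hscal_distr_r, Rplus_0_r.
  reflexivity.
Qed.

Lemma hinner_zero_l (H : Hilbert) (y : H) : hinner H (hzero H) y = 0.
Proof. rewrite <- (hscal0 H (hzero H)), hinner_scal_l. ring. Qed.

Lemma hinner_add_r (H : Hilbert) (x y z : H) : hinner H x (hadd H y z) = hinner H x y + hinner H x z.
Proof. rewrite hinner_sym, hinner_add_l, (hinner_sym H y x), (hinner_sym H z x). reflexivity. Qed.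
Lemma hinner_scal_r (H : Hilbert) a (x y : H) : hinner H x (hscal H a y) = a * hinner H x y.
Proof. rewrite hinner_sym, hinner_scal_l, (hinner_sym H y x). reflexivity. Qed.

Lemma hinner_expand (H : Hilbert) (x y : H) s :
  hinner H (hadd H x (hscal H s y)) (hadd H x (hscal H s y)) =
  hinner H x x + 2 * s * hinner H x y + s * s * hinner H y y.
Proof.
  rewrite hinner_add_l, !hinner_add_r, !hinner_scal_l, !hinner_scal_r, (hinner_sym H y x).
  ring.
Qed.

Lemma cauchy_schwarz (H : Hilbert) (x y : H) :
  hinner H x y * hinner H x y <= hinner H x x * hinner H y y.
Proof.
  pose proof (hinner_pos H x) as Hx. pose proof (hinner_pos H y) as Hy.
  destruct (Req_dec (hinner H y y) 0) as [E | E].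
  - apply hinner_def in E. rewrite E, (hinner_sym H x (hzero H)), !hinner_zero_l. nra.
  - assert (Hc : hinner H y y > 0) by lra.
    pose proof (hinner_pos H (hadd H x (hscal H (- hinner H x y / hinner H y y) y))) as Hq.
    rewrite hinner_expand in Hq.
    set (a := hinner H x x) in *. set (b := hinner H x y) in *. set (c := hinner H y y) in *.
    assert (Eq : a + 2 * (- b / c) * b + (- b / c) * (- b / c) * c = a - b * b / c) by (field; lra).
    rewrite Eq in Hq.
    assert (Eq2 : b * b = (b * b / c) * c) by (field; lra).
    rewrite Eq2. nra.
Qed.

Lemma hnorm_triangle (H : Hilbert) (x y : H) : hnorm (hadd H x y) <= hnorm x + hnorm y.
Proof.
  unfold hnorm.
  assert (E : hinner H (hadd H x y) (hadd H x y) = hinner H x x + 2 * hinner H x y + hinner H y y).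
  { rewrite hinner_add_l, !hinner_add_r, (hinner_sym H y x). ring. }
  rewrite E.
  pose proof (hinner_pos H x) as Hx. pose proof (hinner_pos H y) as Hy.
  pose proof (sqrt_sqrt _ Hx) as Sx. pose proof (sqrt_sqrt _ Hy) as Sy.
  pose proof (sqrt_pos (hinner H x x)) as Px. pose proof (sqrt_pos (hinner H y y)) as Py.
  pose proof (cauchy_schwarz H x y) as CS.
  set (nx := sqrt (hinner H x x)) in *. set (ny := sqrt (hinner H y y)) in *.
  assert (Hxy : hinner H x y <= nx * ny).
  { rewrite <- Sx, <- Sy in CS. assert (0 <= nx * ny) by nra. apply Rnot_lt_le; intro Hl. assert (nx*ny*(nx*ny) < hinner H x y * hinner H x y) by nra. nra. }
  assert (Hpos : 0 <= nx + ny) by lra.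
  rewrite <- (sqrt_square (nx + ny) Hpos).
  apply sqrt_le_1_alt. nra.
Qed.

Lemma hsub_split (H : Hilbert) (z y c : H) : hsub z c = hadd H (hsub z y) (hsub y c).
Proof.
  unfold hsub. rewrite (hadd_assoc H (hadd H z (hopp H y)) y (hopp H c)).
  f_equal. rewrite <- hadd_assoc, (hadd_comm H (hopp H y) y), hadd_opp, hadd_zero.
  reflexivity.
Qed.

Lemma hsub_add_l (H : Hilbert) (a b : H) : hsub (hadd H a b) a = b.
Proof.
  unfold hsub. rewrite (hadd_comm H a b), <- hadd_assoc, hadd_opp, hadd_zero. reflexivity.
Qed.

Lemma hsub_self (H : Hilbert) (x : H) : hsub x x = hzero H.
Proof. unfold hsub. apply hadd_opp. Qed.

Lemma hnorm_zero (H : Hilbert) : hnorm (hzero H) = 0.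
Proof. unfold hnorm. rewrite hinner_zero_l. apply sqrt_0. Qed.

Lemma hadd_sub (H : Hilbert) (h h' : H) : hadd H h (hsub h' h) = h'.
Proof.
  unfold hsub. rewrite (hadd_comm H h), <- hadd_assoc, (hadd_comm H (hopp H h) h),
    hadd_opp, hadd_zero. reflexivity.
Qed.

Fixpoint lmin {I : Type} (g : I -> R) (l : list I) : R :=
  match l with nil => 1 | i :: l' => Rmin (g i) (lmin g l') end.

Lemma lmin_pos {I : Type} (g : I -> R) l : (forall i, g i > 0) -> lmin g l > 0.
Proof.
  intros Hg. induction l as [|i l IH]; simpl; [lra|].
  apply Rmin_glb_lt; [apply Hg | exact IH].
Qed.

Lemma lmin_le {I : Type} (g : I -> R) l i : In i l -> lmin g l <= g i.
Proof.
  induction l as [|j l IH]; simpl; [tauto|].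
  intros [-> | Hin]; [apply Rmin_l|].
  eapply Rle_trans; [apply Rmin_r | auto].
Qed.

Lemma aux1 a b e : e > 0 -> a <= b -> a - e <= b.
Proof. intros; lra. Qed.
Lemma aux2 t m a : 0 < t < m -> m <= a / 2 -> a > 0 -> 0 < t < a.
Proof. intros; lra. Qed.
Lemma aux3 x m a y : x <= m -> m <= a / 2 -> y < a / 2 -> x + y < a.
Proof. intros; lra. Qed.

Lemma impl_i_ii (H : Hilbert) f x p A beta :
  beta > 0 -> uniform_lower_sd H f x p beta A ->
  forall h, A h -> Rbar_le (Fin beta) (lower_sd H f x p h).
Proof.
  intros Hb Hu h Hh. apply Rbar_le_eps. intros eps He.
  destruct (Hu eps He) as [d [Hd Hd2]].
  unfold lower_sd.
  match goal with |- Rbar_le _ (Rbar_sup ?S) => destruct (sup_spec S) as [Hs1 _] end.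
  set (V := fun v => exists t h', 0 < t < d /\ hnorm (hsub h' h) < d /\ v = Delta2 H f x p t h').
  apply Rbar_le_trans with (b := Rbar_inf V).
  - destruct (inf_spec V) as [_ Hg2]. apply Hg2.
    intros v [t [h' [Ht [Hn ->]]]]. apply Hd2; [exact Ht|].
    exists h, (hsub h' h). split; [exact Hh | split; [lra | symmetry; apply hadd_sub]].
  - apply Hs1. exists d. split; [exact Hd | reflexivity].
Qed.

Lemma impl_iii_i (H : Hilbert) f x p A :
  compact_set H A ->
  (forall h, A h -> Rbar_lt (Fin 0) (lower_sd H f x p h)) ->
  exists beta, beta > 0 /\ uniform_lower_sd H f x p beta A.
Proof.
  intros Hc Hpos.
  assert (Hloc : forall h, A h -> exists d b, d > 0 /\ b > 0 /\
    forall t h', 0 < t < d -> hnorm (hsub h' h) < d -> Rbar_le (Fin b) (Delta2 H f x p t h')).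
  { intros h Hh. specialize (Hpos h Hh). unfold lower_sd in Hpos.
    match type of Hpos with Rbar_lt _ (Rbar_sup ?S) =>
      destruct (sup_spec S) as [_ Hs2]; set (S0 := S) in * end.
    assert (HS : exists s, S0 s /\ ~ Rbar_le s (Fin 0)).
    { apply NNPP. intro Hn. destruct Hpos as [Hle Hne].
      assert (Hub : forall s, S0 s -> Rbar_le s (Fin 0)).
      { intros s Hs. apply NNPP. intro Hns. apply Hn. exists s. auto. }
      specialize (Hs2 _ Hub).
      revert Hle Hne Hs2. destruct (Rbar_sup S0) as [r| |]; simpl; intros Hle Hne Hs2.
      - apply Hne. f_equal. lra.
      - exact Hs2.
      - exact Hle. }
    destruct HS as [s [[d [Hd Hsd]] Hns]]. subst s.
    match type of Hns with ~ Rbar_le (Rbar_inf ?V) _ =>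
      pose proof (proj1 (inf_spec V)) as Hi1; revert Hns Hi1; destruct (Rbar_inf V) as [r| |]
    end; simpl; intros Hns Hi1.
    - exists d, r. split; [exact Hd | split; [lra|]].
      intros t h' Ht Hn. apply Hi1. exists t, h'. split; [exact Ht | split; [exact Hn | reflexivity]].
    - exists d, 1. split; [exact Hd | split; [lra|]].
      intros t h' Ht Hn.
      assert (Hv := Hi1 (Delta2 H f x p t h') (ex_intro _ t (ex_intro _ h' (conj Ht (conj Hn eq_refl))))).
      destruct (Delta2 H f x p t h'); simpl in *; tauto.
    - exfalso. apply Hns. exact I. }
  assert (Hch : forall i : {h : H | A h}, {db : R * R | fst db > 0 /\ snd db > 0 /\
    forall t h', 0 < t < fst db -> hnorm (hsub h' (proj1_sig i)) < fst db ->
      Rbar_le (Fin (snd db)) (Delta2 H f x p t h')}).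
  { intros [h Hh]. apply constructive_indefinite_description.
    destruct (Hloc h Hh) as [d [b Hdb]]. exists (d, b). simpl. exact Hdb. }
  destruct (Hc {h : H | A h} (fun i y => hnorm (hsub y (proj1_sig i)) < fst (proj1_sig (Hch i)) / 2))
    as [l Hl].
  - intros i y Hy. exists (fst (proj1_sig (Hch i)) / 2 - hnorm (hsub y (proj1_sig i))).
    split; [lra|]. intros z Hz. rewrite (hsub_split H z y (proj1_sig i)).
    eapply Rle_lt_trans; [apply hnorm_triangle|]. lra.
  - intros y Hy. exists (exist _ y Hy). simpl. rewrite hsub_self, hnorm_zero.
    destruct (proj2_sig (Hch (exist _ y Hy))) as [HD _]. apply Rmult_lt_0_compat; [exact HD | apply Rinv_0_lt_compat; lra].
  - exists (lmin (fun i => snd (proj1_sig (Hch i))) l). split.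
    { apply lmin_pos. intros i. destruct (proj2_sig (Hch i)) as [_ [HB _]]. exact HB. }
    intros eps He. exists (lmin (fun i => fst (proj1_sig (Hch i)) / 2) l). split.
    { apply lmin_pos. intros i. destruct (proj2_sig (Hch i)) as [HD _]. lra. }
    intros t h' Ht [a [b [Ha [Hb ->]]]].
    destruct (Hl a Ha) as [i [Hin Hai]].
    pose proof (lmin_le (fun i => fst (proj1_sig (Hch i)) / 2) l i Hin) as Hdl.
    pose proof (lmin_le (fun i => snd (proj1_sig (Hch i))) l i Hin) as Hbl.
    cbv beta in Hdl, Hbl.
    destruct (proj2_sig (Hch i)) as [HD [HB Hprop]].
    eapply Rbar_le_trans; [| apply Hprop].
    + simpl. exact (aux1 _ _ _ He Hbl).
    + exact (aux2 _ _ _ Ht Hdl HD).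
    + rewrite (hsub_split H (hadd H a b) a (proj1_sig i)), hsub_add_l.
      eapply Rle_lt_trans; [apply hnorm_triangle|]. exact (aux3 _ _ _ _ Hb Hdl Hai).
Qed.

Lemma impl_ii_iii (H : Hilbert) f x p A :
  (exists beta, beta > 0 /\ forall h, A h -> Rbar_le (Fin beta) (lower_sd H f x p h)) ->
  forall h, A h -> Rbar_lt (Fin 0) (lower_sd H f x p h).
Proof.
  intros [beta [Hb Hf]] h Hh. specialize (Hf h Hh).
  split.
  - eapply Rbar_le_trans; [| exact Hf]. simpl. lra.
  - intro E. rewrite <- E in Hf. simpl in Hf. lra.
Qed.

Theorem proposition5p1 (H : Hilbert) (f : H -> Rinf) (xbar p : H) (A : H -> Prop) :
  proper H f -> lsc H f -> in_dom H f xbar -> proximal_subgradient H f xbar p ->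
  (exists a, A a) -> compact_set H A ->
  ((exists beta, beta > 0 /\ uniform_lower_sd H f xbar p beta A) <->
   (exists beta, beta > 0 /\ forall h, A h -> Rbar_le (Fin beta) (lower_sd H f xbar p h))) /\
  ((exists beta, beta > 0 /\ forall h, A h -> Rbar_le (Fin beta) (lower_sd H f xbar p h)) <->
   (forall h, A h -> Rbar_lt (Fin 0) (lower_sd H f xbar p h))).
Proof.
  intros _ _ _ _ _ Hc.
  assert (I2 : (exists beta, beta > 0 /\ uniform_lower_sd H f xbar p beta A) ->
     (exists beta, beta > 0 /\ forall h, A h -> Rbar_le (Fin beta) (lower_sd H f xbar p h))).
  { intros [beta [Hb Hu]]. exists beta. split; [exact Hb|]. exact (impl_i_ii H f xbar p A beta Hb Hu). }
  split; split.
  - exact I2.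
  - intro Hii. apply (impl_iii_i H f xbar p A Hc). apply impl_ii_iii. exact Hii.
  - apply impl_ii_iii.
  - intro Hiii. apply I2. apply (impl_iii_i H f xbar p A Hc). exact Hiii.
Qed.
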